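(* Let $k\ge 2$ be an integer and let $\mathcal{M}_k:(1,+\infty)^k\to\mathbb{R}$ be defined by $$\mathcal{M}_k(x_1,\ldots,x_k)=\int_{[0,1]^{k-1}} (x_1-1)^{t_1}(x_2-1)^{t_2}\cdots(x_{k-1}-1)^{t_{k-1}}(x_k-1)^{1-(t_1+\cdots+t_{k-1})}\,dt_1\cdots dt_{k-1}.$$ Then for all $x_1,\ldots,x_k\in(1,+\infty)$ with $x_i\neq x_k$ for $i=1,\ldots,k-1$, $$\mathcal{M}_k(x_1,\ldots,x_k)=\frac{(x_1-x_k)(x_2-x_k)\cdots(x_{k-1}-x_k)}{(x_k-1)^{k-2}\log\left(\frac{x_1-1}{x_k-1}\right)\cdots\log\left(\frac{x_{k-1}-1}{x_k-1}\right)}.$$ *)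

(* Defs.v *)
From Stdlib Require Import Reals.
From Coquelicot Require Import Coquelicot.
Open Scope R_scope.

Fixpoint prodR (n : nat) (f : nat -> R) : R :=
  match n with
  | O => 1
  | S m => prodR m f * f (S m)
  end.

Fixpoint sumR (n : nat) (f : nat -> R) : R :=
  match n with
  | O => 0
  | S m => sumR m f + f (S m)
  end.

(* iter_RInt n F = integral of F over the cube [0,1]^n in the coordinates
   t 1, ..., t n (as an iterated Riemann integral; other coordinates 0). *)
Fixpoint iter_RInt (n : nat) (F : (nat -> R) -> R) : R :=
  match n with
  | O => F (fun _ => 0)
  | S m => RInt (fun s =>
             iter_RInt m (fun t => F (fun i => if Nat.eqb i (S m) then s else t i)))
             0 1
  end.

Definition Mk (k : nat) (x : nat -> R) : R :=
  iter_RInt (k - 1) (fun t =>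
    prodR (k - 1) (fun i => Rpower (x i - 1) (t i)) *
    Rpower (x k - 1) (1 - sumR (k - 1) t)).

(* Main.v *)
Require Import Defs.
From Stdlib Require Import Reals Lra Lia FunctionalExtensionality.
From Coquelicot Require Import Coquelicot.
Open Scope R_scope.

Lemma prodR_ext n f g : (forall i, (1 <= i <= n)%nat -> f i = g i) -> prodR n f = prodR n g.
Proof.
  induction n; intros H; simpl; auto.
  rewrite IHn by (intros; apply H; lia). rewrite H by lia. reflexivity.
Qed.

Lemma iter_prod n : forall (g : nat -> R -> R) (l : nat -> R) C,
  (forall i, (1 <= i <= n)%nat -> is_RInt (g i) 0 1 (l i)) ->
  iter_RInt n (fun t => C * prodR n (fun i => g i (t i))) = C * prodR n l.
Proof.
  induction n; intros g l C H; simpl. reflexivity.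
  assert (E : (fun s => iter_RInt n (fun t => C *
      (prodR n (fun i => g i (if Nat.eqb i (S n) then s else t i)) *
       g (S n) (if Nat.eqb n n then s else t (S n)))))
     = (fun s => (C * prodR n l) * g (S n) s)).
  { apply functional_extensionality; intro s.
    rewrite Nat.eqb_refl.
    transitivity (iter_RInt n (fun t => (C * g (S n) s) * prodR n (fun i => g i (t i)))).
    { f_equal. apply functional_extensionality; intro t.
      rewrite (prodR_ext n _ (fun i => g i (t i))). ring.
      intros i Hi. replace (Nat.eqb i (S n)) with false. reflexivity.
      symmetry. apply Nat.eqb_neq. lia. }
    rewrite (IHn g l). ring. intros; apply H; lia. }
  rewrite E. apply is_RInt_unique. rewrite <- Rmult_assoc.
  apply (is_RInt_scal (fun s => g (S n) s) 0 1 (C * prodR n l) (l (S n))).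
  apply H; lia.
Qed.

Lemma integrand_eq n (a : nat -> R) c u : 0 < c -> (forall i, (1 <= i <= n)%nat -> 0 < a i) ->
  forall t : nat -> R,
  prodR n (fun i => Rpower (a i) (t i)) * Rpower c (u - sumR n t) =
  Rpower c u * prodR n (fun i => Rpower (a i / c) (t i)).
Proof.
  intros Hc. induction n; intros Ha t; simpl.
  - rewrite Rminus_0_r. ring.
  - replace (u - (sumR n t + t (S n))) with ((u - sumR n t) + - t (S n)) by ring.
    rewrite Rpower_plus.
    replace (prodR n (fun i => Rpower (a i) (t i)) * Rpower (a (S n)) (t (S n)) *
      (Rpower c (u - sumR n t) * Rpower c (- t (S n)))) with
      ((prodR n (fun i => Rpower (a i) (t i)) * Rpower c (u - sumR n t)) *
       (Rpower (a (S n)) (t (S n)) * Rpower c (- t (S n)))) by ring.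
    rewrite IHn by (intros; apply Ha; lia).
    assert (0 < a (S n)) by (apply Ha; lia).
    unfold Rpower. rewrite ln_div by auto. rewrite <- exp_plus.
    replace (t (S n) * ln (a (S n)) + - t (S n) * ln c) with (t (S n) * (ln (a (S n)) - ln c)) by ring.
    ring.
Qed.

Lemma int_pow r : 0 < r -> r <> 1 -> is_RInt (fun s => Rpower r s) 0 1 ((r - 1) / ln r).
Proof.
  intros Hr H1.
  assert (Hl : ln r <> 0).
  { intro E. apply H1. apply ln_inv; [auto|lra|]. rewrite E, ln_1; auto. }
  replace ((r - 1) / ln r) with (minus (exp (1 * ln r) / ln r) (exp (0 * ln r) / ln r)).
  2: { unfold minus, plus, opp; simpl. rewrite Rmult_1_l, Rmult_0_l, exp_ln, exp_0 by auto. field; auto. }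
  apply (is_RInt_derive (fun s => exp (s * ln r) / ln r)).
  - intros x _. unfold Rpower. auto_derive; auto. field; auto.
  - intros x _. apply (@ex_derive_continuous R_AbsRing R_NormedModule (fun s => Rpower r s)). unfold Rpower. auto_derive; auto.
Qed.

Lemma prod_div n (u v : nat -> R) c : c <> 0 -> (forall i, (1 <= i <= n)%nat -> v i <> 0) ->
  prodR n (fun i => (u i / c) / v i) = prodR n u / (c ^ n * prodR n v).
Proof.
  intros Hc. induction n; intros Hv; simpl. field.
  rewrite IHn by (intros; apply Hv; lia).
  assert (v (S n) <> 0) by (apply Hv; lia).
  assert (prodR n v <> 0).
  { clear IHn. induction n; simpl. lra. apply Rmult_integral_contrapositive; split.
    apply IHn; intros; apply Hv; lia. apply Hv; lia. }
  field. repeat split; auto. apply pow_nonzero; auto.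
Qed.

Lemma prodR_nz n v : (forall i, (1 <= i <= n)%nat -> v i <> 0) -> prodR n v <> 0.
Proof.
  induction n; intros Hv; simpl. lra. apply Rmult_integral_contrapositive; split.
  apply IHn; intros; apply Hv; lia. apply Hv; lia.
Qed.

Theorem mainTheorem7 (k : nat) (x : nat -> R)
  (hk : (2 <= k)%nat)
  (hx : forall i, (1 <= i <= k)%nat -> 1 < x i)
  (hne : forall i, (1 <= i <= k - 1)%nat -> x i <> x k) :
  Mk k x =
  prodR (k - 1) (fun i => x i - x k) /
  ((x k - 1) ^ (k - 2) * prodR (k - 1) (fun i => ln ((x i - 1) / (x k - 1)))).
Proof.
  assert (Hc : 0 < x k - 1) by (assert (1 < x k) by (apply hx; lia); lra).
  assert (Ha : forall i, (1 <= i <= k - 1)%nat -> 0 < x i - 1) by (intros i Hi; assert (1 < x i) by (apply hx; lia); lra).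
  unfold Mk.
  assert (E : (fun t => prodR (k - 1) (fun i => Rpower (x i - 1) (t i)) *
      Rpower (x k - 1) (1 - sumR (k - 1) t)) =
     (fun t => (x k - 1) * prodR (k - 1) (fun i => Rpower ((x i - 1) / (x k - 1)) (t i)))).
  { apply functional_extensionality; intro t.
    rewrite (integrand_eq (k - 1) (fun i => x i - 1) (x k - 1) 1 Hc Ha t).
    rewrite Rpower_1 by auto. reflexivity. }
  rewrite E.
  rewrite (iter_prod (k - 1) (fun i s => Rpower ((x i - 1) / (x k - 1)) s)
     (fun i => ((x i - 1) / (x k - 1) - 1) / ln ((x i - 1) / (x k - 1)))).
  2: { intros i Hi. apply int_pow.
       apply Rdiv_lt_0_compat; auto.
       intro E1. apply (hne i Hi). apply Rmult_eq_compat_r with (r := x k - 1) in E1.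
       unfold Rdiv in E1. rewrite Rmult_assoc, Rinv_l, Rmult_1_r, Rmult_1_l in E1 by lra. lra. }
  rewrite (prodR_ext (k - 1) _ (fun i => ((x i - x k) / (x k - 1)) / ln ((x i - 1) / (x k - 1)))).
  2: { intros i Hi. f_equal. field. lra. }
  assert (Hln : forall i, (1 <= i <= k - 1)%nat -> ln ((x i - 1) / (x k - 1)) <> 0).
  { intros i Hi E1. assert (0 < (x i - 1) / (x k - 1)) by (apply Rdiv_lt_0_compat; auto; apply Ha; auto).
       apply (hne i Hi). rewrite <- ln_1 in E1. apply ln_inv in E1; [| auto | lra].
       apply Rmult_eq_compat_r with (r := x k - 1) in E1.
       unfold Rdiv in E1. rewrite Rmult_assoc, Rinv_l, Rmult_1_r, Rmult_1_l in E1 by lra. lra. }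
  assert (HP := prodR_nz (k - 1) _ Hln).
  rewrite prod_div by (auto; lra).
  replace (k - 1)%nat with (S (k - 2)) in * by lia. simpl. simpl in HP.
  field. repeat split; auto. intro Z; apply HP; rewrite Z; ring. intro Z; apply HP; rewrite Z; ring.
  apply pow_nonzero; lra. lra.
Qed.
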